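(* Let $G$ be a graph that has a barbell partition. Then there is a matrix $M\in\mathcal{S}(G)$ that does not have the strong Arnold property (and hence does not have the strong spectral property).
   Context: All graphs are finite, simple, undirected. For a graph $G$ with vertex set $\{1,\ldots,n\}$, $\mathcal{S}(G)$ is the set of all real symmetric $n\times n$ matrices $A=(a_{ij})$ such that for $i\neq j$, $a_{ij}\neq 0$ iff $\{i,j\}\in E(G)$ (diagonal arbitrary). A real symmetric matrix $A$ has the strong Arnold property (SAP) if the only real symmetric $X$ with $A\circ X=0$, $I\circ X=0$ and $AX=0$ is $X=0$; it has the strong spectral property (SSP) if the only real symmetric $X$ with $A\circ X=0$, $I\circ X=0$ and $AX-XA=0$ is $X=0$ ($\circ$ is the entrywise product). A barbell partition of $G$ is a partition of $V(G)$ into three disjoint sets $R,W_1,W_2$ such that: $R$ may be empty but $W_1\neq\emptyset$ and $W_2\neq\emptyset$; there are no edges between $W_1$ and $W_2$; and for every $v\in R$ and $i=1,2$, $|N_G(v)\cap W_i|\neq 1$, where $N_G(v)$ is the set of neighbours of $v$. *)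

(* Defs.v *)
From HB Require Import structures.
From mathcomp Require Import all_boot all_order all_algebra.
From mathcomp Require Import reals.
Set Implicit Arguments. Unset Strict Implicit. Unset Printing Implicit Defensive.
Import Order.TTheory GRing.Theory Num.Theory.
Local Open Scope ring_scope.

Definition simple_graph (n : nat) (e : rel 'I_n) : Prop :=
  symmetric e /\ irreflexive e.

Definition nbhd (n : nat) (e : rel 'I_n) (v : 'I_n) : {set 'I_n} :=
  [set u | e v u].

Definition in_SG (R : realType) (n : nat) (e : rel 'I_n) (A : 'M[R]_n) : Prop :=
  A^T = A /\ forall i j : 'I_n, i != j -> (A i j != 0) = e i j.

Definition hadamard (R : realType) (n : nat) (A B : 'M[R]_n) : 'M[R]_n :=
  \matrix_(i, j) (A i j * B i j).

Definition SAP (R : realType) (n : nat) (A : 'M[R]_n) : Prop :=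
  forall X : 'M[R]_n, X^T = X -> hadamard A X = 0 -> hadamard 1%:M X = 0 ->
    A *m X = 0 -> X = 0.

Definition SSP (R : realType) (n : nat) (A : 'M[R]_n) : Prop :=
  forall X : 'M[R]_n, X^T = X -> hadamard A X = 0 -> hadamard 1%:M X = 0 ->
    A *m X - X *m A = 0 -> X = 0.

Definition barbell_partition (n : nat) (e : rel 'I_n) (R0 W1 W2 : {set 'I_n}) : Prop :=
  [/\ [disjoint R0 & W1], [disjoint R0 & W2] & [disjoint W1 & W2]] /\
  R0 :|: W1 :|: W2 = [set: 'I_n] /\
  W1 != set0 /\ W2 != set0 /\
  (forall u v, u \in W1 -> v \in W2 -> ~~ e u v) /\
  (forall v, v \in R0 -> #|nbhd e v :&: W1| != 1%N /\ #|nbhd e v :&: W2| != 1%N).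

Definition has_barbell_partition (n : nat) (e : rel 'I_n) : Prop :=
  exists R0 W1 W2 : {set 'I_n}, barbell_partition e R0 W1 W2.

(* Main.v *)
Require Import Defs.
From HB Require Import structures.
From mathcomp Require Import all_boot all_order all_algebra.
From mathcomp Require Import reals ring.
Import Order.TTheory GRing.Theory Num.Theory.
Local Open Scope ring_scope.

Definition fw (R : realType) {n : nat} (e : rel 'I_n) (W : {set 'I_n}) (v u : 'I_n) : R :=
  if Some u == [pick w in nbhd e v :&: W] then 1 - (#|nbhd e v :&: W|)%:R else 1.

Lemma sum_fw (R : realType) {n : nat} (e : rel 'I_n) (W : {set 'I_n}) v :
  #|nbhd e v :&: W| != 1%N ->
  \sum_(j in nbhd e v :&: W) fw R e W v j = 0.
Proof.
move=> Hk; rewrite /fw.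
case: pickP => [p Hp|H0].
  rewrite (bigD1 p) //= eqxx.
  rewrite (eq_bigr (fun _ => 1)); last by move=> j /andP[_ Hj]; rewrite (inj_eq (@Some_inj _)) (negbTE Hj).
  rewrite sumr_const.
  have -> : #|[pred j in nbhd e v :&: W | j != p]| = (#|nbhd e v :&: W|).-1.
    rewrite (cardsD1 p (nbhd e v :&: W)) Hp /=.
    by apply: eq_card => j; rewrite !inE andbC.
  have : (0 < #|nbhd e v :&: W|)%N by apply/card_gt0P; exists p.
  case: #|_| Hk => //= k _ _.
  by rewrite -natr1 /=; ring.
rewrite big_pred0 // => j; exact: H0.
Qed.

Lemma ker_ind (R : realType) {n : nat} (e : rel 'I_n) (R0 W : {set 'I_n}) (M : 'M[R]_n) :
  irreflexive e -> [disjoint R0 & W] ->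
  (forall i j, i \notin R0 -> i \notin W -> j \in W -> ~~ e i j) ->
  (forall v, v \in R0 -> #|nbhd e v :&: W| != 1%N) ->
  (forall i, i \in W -> M i i = - (#|nbhd e i :&: W|)%:R) ->
  (forall i j, i != j -> j \in W ->
     M i j = if e i j then (if i \in R0 then fw R e W i j else 1) else 0) ->
  M *m (\col_j ((j \in W)%:R)) = 0.
Proof.
move=> Hirr Hdis Hno Hcard Hdiag HM.
apply/matrixP => i k; rewrite !mxE.
rewrite (eq_bigr (fun j => if j \in W then M i j else 0)); last first.
  by move=> j _; rewrite mxE; case: (j \in W); rewrite ?mulr1 ?mulr0.
rewrite -big_mkcond /=.
have neq : forall j, j \in W -> i \notin W -> i != j.
  by move=> j Hj Hi; apply/eqP => E; rewrite E Hj in Hi.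
case: (boolP (i \in R0)) => HiR.
  have HiW : i \notin W by rewrite (disjointFr Hdis HiR).
  rewrite (eq_bigr (fun j => if e i j then fw R e W i j else 0)); last first.
    by move=> j Hj; rewrite HM ?HiR ?neq.
  rewrite -big_mkcondr /=.
  rewrite -[RHS](@sum_fw R n e W i (Hcard _ HiR)).
  by apply: eq_bigl => j; rewrite !inE andbC.
case: (boolP (i \in W)) => HiW.
  rewrite (bigD1 i) //= Hdiag //.
  rewrite (eq_bigr (fun j => if e i j then 1 else 0)); last first.
    by move=> j /andP[Hj Hji]; rewrite HM 1?eq_sym // (negbTE HiR).
  rewrite -big_mkcondr /= sumr_const.
  have -> : #|[pred j | (j \in W) && (j != i) && e i j]| = #|nbhd e i :&: W|.
    apply: eq_card => j; rewrite !inE.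
    case: (eqVneq j i) => [->|_]; first by rewrite Hirr andbF.
    by rewrite andbT andbC.
  by rewrite addNr.
rewrite big1 // => j Hj.
by rewrite HM ?neq // (negbTE (Hno _ _ HiR HiW Hj)).
Qed.

Lemma fw_neq0 (R : realType) {n : nat} (e : rel 'I_n) W v u :
  #|nbhd e v :&: W| != 1%N -> fw R e W v u != 0.
Proof.
move=> Hk; rewrite /fw; case: ifP => _; last exact: oner_neq0.
by rewrite subr_eq0 eq_sym pnatr_eq1.
Qed.

Definition ww (R : realType) {n : nat} (e : rel 'I_n) (W1 W2 : {set 'I_n}) (v u : 'I_n) : R :=
  if u \in W1 then fw R e W1 v u else if u \in W2 then fw R e W2 v u else 1.

Definition dg (R : realType) {n : nat} (e : rel 'I_n) (W1 W2 : {set 'I_n}) (i : 'I_n) : R :=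
  if i \in W1 then - (#|nbhd e i :&: W1|)%:R
  else if i \in W2 then - (#|nbhd e i :&: W2|)%:R else 0.

Definition Mb (R : realType) {n : nat} (e : rel 'I_n) (R0 W1 W2 : {set 'I_n}) : 'M[R]_n :=
  \matrix_(i, j) if i == j then dg R e W1 W2 i
                 else if e i j then
                   (if i \in R0 then ww R e W1 W2 i j
                    else if j \in R0 then ww R e W1 W2 j i else 1)
                 else 0.

Definition indv (R : realType) {n : nat} (W : {set 'I_n}) : 'cV[R]_n :=
  \col_j ((j \in W)%:R).

Theorem lemma2p5 (R : realType) (n : nat) (e : rel 'I_n) :
  simple_graph e -> has_barbell_partition e ->
  exists M : 'M[R]_n, in_SG e M /\ ~ SAP M /\ ~ SSP M.
Proof.
move=> [Hsym Hirr] [R0 [W1 [W2 [[d01 d02 d12] [cov [n1 [n2 [noe deg]]]]]]]].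
have cov' : forall i, i \notin R0 -> i \notin W1 -> i \in W2.
  move=> i a b; have : i \in [set: 'I_n] by rewrite inE.
  by rewrite -cov !inE (negbTE a) (negbTE b).
have noe' : forall u v, u \in W2 -> v \in W1 -> ~~ e u v.
  by move=> u v a b; rewrite Hsym; apply: noe.
pose M := Mb R e R0 W1 W2.
have Mb0 : forall i j, ((i \in W1) && (j \in W2)) || ((i \in W2) && (j \in W1)) -> M i j = 0.
  move=> i j /orP[/andP[a b]|/andP[a b]]; unfold M; rewrite /Mb mxE.
    have -> : (i == j) = false by apply/negbTE/eqP => E; move: a; rewrite E (disjointFl d12 b).
    by rewrite (negbTE (noe _ _ a b)).
  have -> : (i == j) = false by apply/negbTE/eqP => E; move: a; rewrite E (disjointFr d12 b).
  by rewrite (negbTE (noe' _ _ a b)).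
have Msym : M^T = M.
  apply/matrixP => i j; unfold M; rewrite /Mb !mxE eq_sym Hsym.
  case: (eqVneq j i) => [->|_] //.
  case: (e i j) => //.
  case Hi: (i \in R0); case Hj: (j \in R0) => //=.
  by unfold ww; rewrite (disjointFr d01 Hi) (disjointFr d02 Hi) (disjointFr d01 Hj) (disjointFr d02 Hj).
have wwnz : forall v u, v \in R0 -> ww R e W1 W2 v u != 0.
  move=> v u Hv; unfold ww; case: ifP => _; first by apply: fw_neq0; case: (deg v Hv).
  case: ifP => _; first by apply: fw_neq0; case: (deg v Hv).
  exact: oner_neq0.
have inSG : in_SG e M.
  split => // i j Hij; unfold M; rewrite /Mb mxE (negbTE Hij).
  case: (e i j); last by rewrite eqxx.
  case: ifP => Hi; first exact: wwnz.
  case: ifP => Hj; first exact: wwnz.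
  exact: oner_neq0.
have K1 : M *m indv R W1 = 0.
  apply: (@ker_ind R n e R0 W1) => //.
  - by move=> i j a b c; apply: noe' => //; apply: cov'.
  - by move=> v Hv; case: (deg v Hv).
  - by move=> i Hi; unfold M; rewrite /Mb mxE eqxx /dg Hi.
  - move=> i j Hij Hj; unfold M; rewrite /Mb mxE (negbTE Hij) (disjointFl d01 Hj).
    by unfold ww; rewrite Hj.
have cov2 : forall i, i \notin R0 -> i \notin W2 -> i \in W1.
  move=> i a b; apply/negPn/negP => c; by rewrite (cov' i a c) in b.
have K2 : M *m indv R W2 = 0.
  apply: (@ker_ind R n e R0 W2) => //.
  - by move=> i j a b c; apply: noe => //; apply: cov2.
  - by move=> v Hv; case: (deg v Hv).
  - by move=> i Hi; unfold M; rewrite /Mb mxE eqxx /dg Hi (disjointFl d12 Hi).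
  - move=> i j Hij Hj; unfold M; rewrite /Mb mxE (negbTE Hij) (disjointFl d02 Hj).
    by unfold ww; rewrite Hj (disjointFl d12 Hj).
pose X := indv R W1 *m (indv R W2)^T + indv R W2 *m (indv R W1)^T.
have Xij : forall i j, X i j = ((i \in W1) && (j \in W2))%:R + ((i \in W2) && (j \in W1))%:R.
  by move=> i j; rewrite !mxE !big_ord1 !mxE -!natrM !mulnb.
have XT : X^T = X.
  by unfold X; rewrite linearD /= !trmx_mul !trmxK addrC.
have hM : hadamard M X = 0.
  apply/matrixP => i j; rewrite /hadamard mxE Xij [RHS]mxE.
  case A: ((i \in W1) && (j \in W2)); first by rewrite Mb0 ?A // mul0r.
  case B: ((i \in W2) && (j \in W1)); first by rewrite Mb0 ?B ?orbT // mul0r.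
  by rewrite /= addr0 mulr0.
have hI : hadamard 1%:M X = 0.
  apply/matrixP => i j; rewrite /hadamard mxE Xij [RHS]mxE mxE.
  case: (eqVneq i j) => [->|_]; last by rewrite mulr0n mul0r.
  case: (boolP (j \in W1)) => a; first by rewrite (disjointFr d12 a) /= addr0 mulr0n mulr0.
  by rewrite andbF /= addr0 mulr0.
have MX : M *m X = 0.
  by unfold X; rewrite mulmxDr !mulmxA K1 K2 !mul0mx addr0.
have XM : X *m M = 0.
  by rewrite -XT -Msym -trmx_mul MX trmx0.
have Xn0 : X != 0.
  case/set0Pn: n1 => a Ha; case/set0Pn: n2 => b Hb.
  apply/eqP => /matrixP /(_ a b); rewrite Xij !mxE Ha Hb (disjointFr d12 Ha) /= addr0.
  by move/eqP; rewrite oner_eq0.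
exists M; split => //; split.
  by move=> H; move/eqP: Xn0; apply; apply: H.
by move=> H; move/eqP: Xn0; apply; apply: H => //; rewrite MX XM subrr.
Qed.
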